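(* Let $n\ge1$ be an integer and $x\in\{0,1,\dots,n\}$ an observed value of $X\sim B(n,p)$. For $\alpha\in(0,1)$ let $g(\alpha)$ be the posterior mean of $p$ under the triangle prior with mode $\alpha$ (density $\frac{2}{\alpha}p$ on $(0,\alpha]$ and $\frac{2}{1-\alpha}(1-p)$ on $(\alpha,1)$): $$g(\alpha)=\frac{\frac{2}{\alpha}\int_0^\alpha p^{x+2}(1-p)^{n-x}\,dp+\frac{2}{1-\alpha}\int_\alpha^1 p^{x+1}(1-p)^{n-x+1}\,dp}{\frac{2}{\alpha}\int_0^\alpha p^{x+1}(1-p)^{n-x}\,dp+\frac{2}{1-\alpha}\int_\alpha^1 p^{x}(1-p)^{n-x+1}\,dp},$$ and let $\hat p_{IB}(x)$ denote the unique $\tau\in(0,1)$ with $g(\tau)=\tau$. Then: (1) $\hat p_{IB}(x)$ is the unique real zero in the interval $(0,1)$ of the integer-coefficient polynomial $$J_n(a,x)=2a^{x+2}\sum_{r=0}^{n-x}\binom{n+3}{n-x-r}\binom{x+r}{r}(-1)^r a^r-(n-x+1)(n+3)a+(n-x+1)(x+1).$$ (2) $\frac{x+1}{n+3}<\hat p_{IB}(x)<\frac{x+2}{n+3}$ for $x=0,1,\dots,n$; more precisely, $\frac{x+1}{n+2}<\hat p_{IB}(x)<\frac{x+2}{n+3}$ for $x<\frac n2$, and $\frac{x+1}{n+3}<\hat p_{IB}(x)<\frac{x+1}{n+2}$ for $x>\frac n2$.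
   Context: $B(n,p)$ is the binomial distribution with $n$ trials and success probability $p\in(0,1)$. The fixed point $\hat p_{IB}(x)$ of $g$ in $(0,1)$ (the ''iterative Bayes estimate'') exists and is unique. *)

(* Defs.v *)
From Stdlib Require Import Reals Lra.
From Coquelicot Require Import Coquelicot.
Open Scope R_scope.

Definition g (n x : nat) (a : R) : R :=
  (2 / a * RInt (fun p => p ^ (x + 2) * (1 - p) ^ (n - x)) 0 a
   + 2 / (1 - a) * RInt (fun p => p ^ (x + 1) * (1 - p) ^ (n - x + 1)) a 1)
  /
  (2 / a * RInt (fun p => p ^ (x + 1) * (1 - p) ^ (n - x)) 0 a
   + 2 / (1 - a) * RInt (fun p => p ^ x * (1 - p) ^ (n - x + 1)) a 1).

Definition J (n x : nat) (a : R) : R :=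
  2 * a ^ (x + 2) *
    sum_f_R0 (fun r => Binomial.C (n + 3) (n - x - r) * Binomial.C (x + r) r * (-1) ^ r * a ^ r) (n - x)
  - INR (n - x + 1) * INR (n + 3) * a + INR (n - x + 1) * INR (x + 1).

(* Main.v *)
Require Import Defs.
From Stdlib Require Import Reals Lra Lia Factorial.
From Coquelicot Require Import Coquelicot.
Open Scope R_scope.

Ltac cont := intros; apply (@ex_derive_continuous R_AbsRing R_NormedModule); auto_derive; auto.
Ltac exr := apply (@ex_RInt_continuous R_CompleteNormedModule); cont.

Lemma RInt_scalR (f : R -> R) a b l : ex_RInt f a b -> RInt (fun p => l * f p) a b = l * RInt f a b.
Proof. intros H. exact (RInt_scal f a b l H). Qed.
Lemma RInt_plusR (f g : R -> R) a b : ex_RInt f a b -> ex_RInt g a b ->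
  RInt (fun p => f p + g p) a b = RInt f a b + RInt g a b.
Proof. intros H1 H2. exact (RInt_plus f g a b H1 H2). Qed.
Lemma ex_RInt_scalR (f : R -> R) a b l : ex_RInt f a b -> ex_RInt (fun p => l * f p) a b.
Proof. intros H. exact (ex_RInt_scal f a b l H). Qed.

Lemma RInt_lin (f g : R -> R) (al be a b : R) :
  ex_RInt f a b -> ex_RInt g a b ->
  RInt (fun p => al * f p + be * g p) a b = al * RInt f a b + be * RInt g a b.
Proof.
  intros Hf Hg.
  rewrite RInt_plusR; [|apply ex_RInt_scalR; auto|apply ex_RInt_scalR; auto].
  rewrite !RInt_scalR; auto.
Qed.

Lemma ChaslesR (f : R -> R) a b c : ex_RInt f a b -> ex_RInt f b c ->
  RInt f a b + RInt f b c = RInt f a c.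
Proof. intros. exact (RInt_Chasles f a b c H H0). Qed.

Lemma test (x m : nat) a : ex_RInt (fun p => p^(x+1)*(1-p)^m*(p-a)) 0 a.
Proof. exr. Qed.

Lemma RInt_uniqueR (f : R -> R) a b v : is_RInt f a b v -> RInt f a b = v.
Proof. intros H. exact (is_RInt_unique f a b v H). Qed.

Lemma is_RInt_dv (F dF : R -> R) a b v :
  (forall p : R, is_derive F p (dF p)) -> (forall p : R, continuous dF p) ->
  F b - F a = v -> is_RInt dF a b v.
Proof.
  intros H1 H2 H3. rewrite <- H3. apply (is_RInt_derive F dF a b); intros; auto.
Qed.
Definition beta (k l : nat) : R := RInt (fun p => p^k*(1-p)^l) 0 1.

Lemma is_RInt_0_1_deriv (F dF : R -> R) a b :
  (forall p : R, is_derive F p (dF p)) -> (forall p : R, continuous dF p) ->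
  is_RInt dF a b (F b - F a).
Proof.
  intros H1 H2. apply (is_RInt_derive F dF a b); intros; auto.
Qed.

Lemma beta_rec k l : INR (k+1) * beta k (l+1) = INR (l+1) * beta (k+1) l.
Proof.
  assert (H : is_RInt (fun p => INR (k+1)*(p^k*(1-p)^(l+1)) + (-INR(l+1))*(p^(k+1)*(1-p)^l)) 0 1 0).
  { apply (is_RInt_dv (fun p => p^(k+1)*(1-p)^(l+1))); [| |rewrite !Nat.add_1_r; cbn [pow]; ring].
    - intros p. auto_derive; auto. rewrite !Nat.add_1_r. cbn [Init.Nat.pred pow]. unfold Rminus. ring.
    - cont. }
  apply RInt_uniqueR in H. rewrite RInt_lin in H by exr.
  unfold beta. lra.
Qed.

Lemma beta_val k l : beta k l = INR (fact k) * INR (fact l) / INR (fact (k+l+1)).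
Proof.
  revert k. induction l; intros k.
  - unfold beta.
    assert (HK : INR (k+1) <> 0) by (apply not_0_INR; lia).
    assert (H : is_RInt (fun p => p^k*(1-p)^0) 0 1 (/ INR (k+1))).
    { apply (is_RInt_dv (fun p => / INR(k+1) * p^(k+1))).
      - intros p. auto_derive; auto.
        rewrite !Nat.add_1_r in *. cbn [Init.Nat.pred pow]. field. auto.
      - cont.
      - rewrite !Nat.add_1_r in *. cbn [pow]. rewrite pow1. field. auto. }
    apply RInt_uniqueR in H. rewrite H.
    rewrite Nat.add_0_r. rewrite Nat.add_1_r. change (fact 0) with 1%nat. change (fact (S k)) with (S k * fact k)%nat.
    rewrite mult_INR. rewrite <- Nat.add_1_r. simpl (INR 1). field. split; [apply INR_fact_neq_0|]. auto.
  - pose proof (beta_rec k l) as H. rewrite IHl in H.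
    replace (S l) with (l+1)%nat by lia.
    assert (HK : INR (k+1) <> 0) by (apply not_0_INR; lia).
    apply (Rmult_eq_reg_l (INR (k+1))); auto. rewrite H.
    replace (k + 1 + l + 1)%nat with (S (S (k+l))) by lia.
    replace (k + (l + 1) + 1)%nat with (S (S (k+l))) by lia.
    rewrite !Nat.add_1_r. change (fact (S k)) with (S k * fact k)%nat. change (fact (S l)) with (S l * fact l)%nat. change (fact (S (S (k+l)))) with (S (S (k+l)) * fact (S (k+l)))%nat.
    rewrite !mult_INR. field; repeat split; first [apply INR_fact_neq_0 | apply not_0_INR; lia].
Qed.

Lemma RInt_extR (f g : R -> R) a b : (forall p : R, f p = g p) -> RInt f a b = RInt g a b.
Proof. intros H. apply RInt_ext. intros; apply H. Qed.

Definition Kf (x m : nat) (a : R) : R :=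
  - RInt (fun p => p^(x+1)*(1-p)^m*(1-p/a)) 0 a
  + RInt (fun p => p^x*(1-p)^(m+1)*((p-a)/(1-a))) a 1.

Lemma pos_w (x m : nat) p : 0 < p < 1 -> 0 < p^x*(1-p)^m.
Proof. intros H. apply Rmult_lt_0_compat; apply pow_lt; lra. Qed.

Lemma lin_eq (f g h : R -> R) al be a b :
  ex_RInt g a b -> ex_RInt h a b ->
  (forall p, Rmin a b < p < Rmax a b -> f p = al * g p + be * h p) ->
  RInt f a b = al * RInt g a b + be * RInt h a b.
Proof.
  intros Hg Hh He. rewrite <- RInt_lin by auto. apply RInt_ext. auto.
Qed.

Lemma g_iff (x m : nat) (a : R) : 0 < a < 1 -> (g (x+m) x a = a <-> Kf x m a = 0).
Proof.
  intros Ha. unfold g. replace (x+m-x)%nat with m by lia.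
  set (A2 := RInt (fun p => p^(x+2)*(1-p)^m) 0 a).
  set (A1 := RInt (fun p => p^(x+1)*(1-p)^m) 0 a).
  set (C1 := RInt (fun p => p^(x+1)*(1-p)^(m+1)) a 1).
  set (C0 := RInt (fun p => p^x*(1-p)^(m+1)) a 1).
  assert (E1 : RInt (fun p => p^(x+1)*(1-p)^m*(1-p/a)) 0 a = 1 * A1 + (- / a) * A2).
  { apply lin_eq; try exr. intros p _. replace (x+2)%nat with (S (x+1)) by lia. cbn [pow]. field. lra. }
  assert (E2 : RInt (fun p => p^x*(1-p)^(m+1)*((p-a)/(1-a))) a 1 = / (1-a) * C1 + (- a / (1-a)) * C0).
  { apply lin_eq; try exr. intros p _. replace (x+1)%nat with (S x) by lia. cbn [pow]. field. lra. }
  assert (HA1 : 0 < A1).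
  { apply RInt_gt_0; [lra| |cont]. intros p Hp. apply pos_w. lra. }
  assert (HC0 : 0 < C0).
  { apply RInt_gt_0; [lra| |cont]. intros p Hp. apply pos_w. lra. }
  unfold Kf. rewrite E1, E2.
  assert (HD : 0 < 2 / a * A1 + 2 / (1 - a) * C0).
  { apply Rplus_lt_0_compat; apply Rmult_lt_0_compat; try lra; unfold Rdiv; apply Rmult_lt_0_compat; try lra; apply Rinv_0_lt_compat; lra. }
  split; intros H.
  - apply (Rmult_eq_compat_r (2 / a * A1 + 2 / (1 - a) * C0)) in H.
    unfold Rdiv in H at 1. rewrite Rmult_assoc, Rinv_l in H by lra.
    apply (Rmult_eq_reg_l 2); [|lra]. rewrite Rmult_0_r. rewrite <- (Rminus_diag_eq _ _ H).
    field. lra.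
  - apply (Rmult_eq_reg_r (2 / a * A1 + 2 / (1 - a) * C0)); [|lra].
    unfold Rdiv at 1. rewrite Rmult_assoc, Rinv_l by lra. rewrite Rmult_1_r.
    apply Rminus_diag_uniq. rewrite <- (Rmult_0_r 2). rewrite <- H. field. lra.
Qed.

Lemma lin_eq1 (f g : R -> R) al a b :
  ex_RInt g a b ->
  (forall p, Rmin a b < p < Rmax a b -> f p = al * g p) ->
  RInt f a b = al * RInt g a b.
Proof.
  intros Hg He. rewrite <- RInt_scalR by auto. apply RInt_ext. auto.
Qed.

Lemma Kf_decr (x m : nat) a b : 0 < a -> a < b -> b < 1 -> Kf x m b < Kf x m a.
Proof.
  intros Ha Hab Hb. unfold Kf.
  set (F1 := fun c => RInt (fun p => p^(x+1)*(1-p)^m*(1-p/c)) 0 c).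
  set (F2 := fun c => RInt (fun p => p^x*(1-p)^(m+1)*((p-c)/(1-c))) c 1).
  change (- F1 b + F2 b < - F1 a + F2 a).
  assert (H1 : F1 a < F1 b).
  { unfold F1.
    rewrite <- (ChaslesR _ 0 a b) by exr.
    assert (0 < RInt (fun p => p^(x+1)*(1-p)^m*(1-p/b)) a b).
    { apply RInt_gt_0; [lra| |cont]. intros p Hp. apply Rmult_lt_0_compat.
      apply pos_w; lra. apply Rlt_Rminus. apply (Rmult_lt_reg_r b); [lra|]. field_simplify; lra. }
    assert (RInt (fun p => p^(x+1)*(1-p)^m*(1-p/a)) 0 a <= RInt (fun p => p^(x+1)*(1-p)^m*(1-p/b)) 0 a).
    { apply RInt_le; [lra|exr|exr|]. intros p Hp. apply Rmult_le_compat_l.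
      left; apply pos_w; lra. apply Rplus_le_compat_l, Ropp_le_contravar.
      unfold Rdiv. apply Rmult_le_compat_l; [lra|]. apply Rinv_le_contravar; lra. }
    lra. }
  assert (H2 : F2 b <= F2 a).
  { unfold F2.
    rewrite <- (ChaslesR _ a b 1) by exr.
    assert (0 <= RInt (fun p => p^x*(1-p)^(m+1)*((p-a)/(1-a))) a b).
    { apply RInt_ge_0; [lra|exr|]. intros p Hp. apply Rmult_le_pos.
      left; apply pos_w; lra. unfold Rdiv. apply Rmult_le_pos; [lra|]. left; apply Rinv_0_lt_compat; lra. }
    assert (RInt (fun p => p^x*(1-p)^(m+1)*((p-b)/(1-b))) b 1 <= RInt (fun p => p^x*(1-p)^(m+1)*((p-a)/(1-a))) b 1).
    { apply RInt_le; [lra|exr|exr|]. intros p Hp. apply Rmult_le_compat_l.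
      left; apply pos_w; lra.
      apply (Rmult_le_reg_r ((1-a)*(1-b))). apply Rmult_lt_0_compat; lra.
      field_simplify; try lra. nra. }
    lra. }
  lra.
Qed.

Definition Lf (x m : nat) (a : R) : R := RInt (fun p => p^x*(1-p)^m*(a-p)^2) 0 a.
Definition Rf (x m : nat) (a : R) : R := RInt (fun p => p^x*(1-p)^m*(p-a)^2) a 1.

Lemma rep1 (x m : nat) a : 0 < a < 1 ->
  a * (1-a) * Kf x m a = a * (beta (x+1) (m+1) - a * beta x (m+1)) + Lf x m a.
Proof.
  intros Ha. unfold Kf, Lf, beta.
  set (P1 := fun p => p^(x+1)*(1-p)^m).
  set (P0 := fun p => p^x*(1-p)^(m+1)).
  assert (E1 : RInt (fun p => p^(x+1)*(1-p)^m*(1-p/a)) 0 a = / a * RInt (fun p => P1 p * (a - p)) 0 a).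
  { apply lin_eq1; try (unfold P0, P1; exr). intros p _. unfold P1. field. lra. }
  assert (E2 : RInt (fun p => p^x*(1-p)^(m+1)*((p-a)/(1-a))) a 1 = / (1-a) * RInt (fun p => P0 p * (p - a)) a 1).
  { apply lin_eq1; try (unfold P0, P1; exr). intros p _. unfold P0. field. lra. }
  assert (E3 : RInt (fun p => P0 p * (p - a)) 0 1 - RInt (fun p => P0 p * (p - a)) 0 a = RInt (fun p => P0 p * (p - a)) a 1).
  { rewrite <- (ChaslesR _ 0 a 1) by (unfold P0; exr). ring. }
  assert (E4 : RInt (fun p => P0 p * (p - a)) 0 1 = 1 * RInt (fun p => p^(x+1)*(1-p)^(m+1)) 0 1 + (-a) * RInt (fun p => p^x*(1-p)^(m+1)) 0 1).
  { apply lin_eq; try exr. intros p _. unfold P0. replace (x+1)%nat with (S x) by lia. cbn [pow]. ring. }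
  assert (E5 : RInt (fun p => p^x*(1-p)^m*(a-p)^2) 0 a = (-(1-a)) * RInt (fun p => P1 p * (a - p)) 0 a + (-a) * RInt (fun p => P0 p * (p - a)) 0 a).
  { apply lin_eq; try (unfold P0, P1; exr). intros p _. unfold P0, P1.
    replace (x+1)%nat with (S x) by lia. replace (m+1)%nat with (S m) by lia. cbn [pow]. ring. }
  rewrite E1, E2, <- E3, E4, E5. unfold P0, P1 in *. match goal with |- ?a = ?b => change (@eq R a b) end. field. lra.
Qed.

Lemma rep2 (x m : nat) a : 0 < a < 1 ->
  a * (1-a) * Kf x m a = (1-a) * (beta (x+2) m - a * beta (x+1) m) - Rf x m a.
Proof.
  intros Ha. unfold Kf, Rf, beta.
  set (P1 := fun p => p^(x+1)*(1-p)^m).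
  set (P0 := fun p => p^x*(1-p)^(m+1)).
  assert (E1 : RInt (fun p => p^(x+1)*(1-p)^m*(1-p/a)) 0 a = / a * RInt (fun p => P1 p * (a - p)) 0 a).
  { apply lin_eq1; try (unfold P0, P1; exr). intros p _. unfold P1. field. lra. }
  assert (E2 : RInt (fun p => p^x*(1-p)^(m+1)*((p-a)/(1-a))) a 1 = / (1-a) * RInt (fun p => P0 p * (p - a)) a 1).
  { apply lin_eq1; try (unfold P0, P1; exr). intros p _. unfold P0. field. lra. }
  assert (E3 : RInt (fun p => P1 p * (a - p)) 0 1 - RInt (fun p => P1 p * (a - p)) a 1 = RInt (fun p => P1 p * (a - p)) 0 a).
  { rewrite <- (ChaslesR _ 0 a 1) by (unfold P1; exr). ring. }
  assert (E4 : RInt (fun p => P1 p * (a - p)) 0 1 = (-1) * RInt (fun p => p^(x+2)*(1-p)^m) 0 1 + a * RInt (fun p => p^(x+1)*(1-p)^m) 0 1).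
  { apply lin_eq; try exr. intros p _. unfold P1. replace (x+2)%nat with (S (x+1)) by lia. cbn [pow]. ring. }
  assert (E5 : RInt (fun p => p^x*(1-p)^m*(p-a)^2) a 1 = (-(1-a)) * RInt (fun p => P1 p * (a - p)) a 1 + (-a) * RInt (fun p => P0 p * (p - a)) a 1).
  { apply lin_eq; try (unfold P0, P1; exr). intros p _. unfold P0, P1.
    replace (x+1)%nat with (S x) by lia. replace (m+1)%nat with (S m) by lia. cbn [pow]. ring. }
  rewrite E1, E2, <- E3, E4, E5. unfold P0, P1 in *. match goal with |- ?a = ?b => change (@eq R a b) end. field. lra.
Qed.

Lemma is_RInt_sumf (F : nat -> R -> R) (v : nat -> R) a b N :
  (forall r, (r <= N)%nat -> is_RInt (F r) a b (v r)) ->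
  is_RInt (fun p => sum_f_R0 (fun r => F r p) N) a b (sum_f_R0 v N).
Proof.
  induction N; intros H.
  - simpl. apply H. lia.
  - simpl. apply (is_RInt_plus (V:=R_NormedModule)).
    + apply IHN. intros r Hr. apply H. lia.
    + apply H. lia.
Qed.

Lemma is_RInt_mono (k : nat) a :
  is_RInt (fun p => p^k*(a-p)^2) 0 a (2*a^(k+3)/(INR (k+1)*INR (k+2)*INR (k+3))).
Proof.
  assert (H1 : INR (S k) <> 0) by (apply not_0_INR; lia).
  assert (H2 : INR (S (S k)) <> 0) by (apply not_0_INR; lia).
  assert (H3 : INR (S (S (S k))) <> 0) by (apply not_0_INR; lia).
  replace (k+1)%nat with (S k) by lia. replace (k+2)%nat with (S (S k)) by lia.
  replace (k+3)%nat with (S (S (S k))) by lia.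
  apply (is_RInt_dv (fun p => a^2*p^(S k)/INR (S k) - 2*a*p^(S (S k))/INR (S (S k)) + p^(S (S (S k)))/INR (S (S (S k))))).
  - intros p. auto_derive; auto. cbn [Init.Nat.pred pow]. change (match k with 0%nat => 1 | S _ => INR k + 1 end) with (INR (S k)). rewrite !S_INR in *. match goal with |- ?a = ?b => change (@eq R a b) end. field. lra.
  - cont.
  - cbn [pow]. rewrite !Rmult_0_l. rewrite !S_INR in *. field. lra.
Qed.

Lemma expand_w (x m : nat) a p :
  p^x*(1-p)^m*(a-p)^2 = sum_f_R0 (fun r => Binomial.C m r * (-1)^r * (p^(x+r)*(a-p)^2)) m.
Proof.
  replace (1-p) with (-p+1) by ring. rewrite binomial.
  match goal with |- ?u * ?s * ?v = _ => replace (u*s*v) with ((u*v)*s) by ring end. rewrite scal_sum.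
  apply sum_eq. intros i Hi. rewrite pow1, pow_add.
  replace (-p) with (-1*p) by ring. rewrite Rpow_mult_distr. ring.
Qed.

Lemma L_val (x m : nat) a : Lf x m a =
  sum_f_R0 (fun r => Binomial.C m r * (-1)^r * (2*a^(x+r+3)/(INR (x+r+1)*INR (x+r+2)*INR (x+r+3)))) m.
Proof.
  unfold Lf. apply RInt_uniqueR.
  apply (is_RInt_ext (V:=R_NormedModule) (fun p => sum_f_R0 (fun r => Binomial.C m r * (-1)^r * (p^(x+r)*(a-p)^2)) m)).
  { intros p _. symmetry. apply expand_w. }
  apply is_RInt_sumf. intros r _.
  apply (is_RInt_scal (V:=R_NormedModule) (fun p => p^(x+r)*(a-p)^2)).
  apply is_RInt_mono.
Qed.

Definition K0 (x m : nat) : R := INR (fact (x+m+3)) / (INR (fact x) * INR (fact m)).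

Lemma K0_pos x m : 0 < K0 x m.
Proof.
  unfold K0. apply Rdiv_lt_0_compat. apply lt_0_INR, lt_O_fact.
  apply Rmult_lt_0_compat; apply lt_0_INR, lt_O_fact.
Qed.

Lemma K0_B1 x m : K0 x m * beta (x+1) (m+1) = INR (m+1) * INR (x+1).
Proof.
  unfold K0. rewrite beta_val.
  replace (x+1+(m+1)+1)%nat with (x+m+3)%nat by lia.
  rewrite !Nat.add_1_r. change (fact (S x)) with (S x * fact x)%nat. change (fact (S m)) with (S m * fact m)%nat.
  rewrite !mult_INR. field. repeat split; apply INR_fact_neq_0.
Qed.

Lemma K0_B2 x m : K0 x m * beta x (m+1) = INR (m+1) * INR (x+m+3).
Proof.
  unfold K0. rewrite beta_val.
  replace (x+(m+1)+1)%nat with (S (S (x+m)))%nat by lia.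
  replace (x+m+3)%nat with (S (S (S (x+m))))%nat by lia.
  rewrite !Nat.add_1_r. change (fact (S (S (S (x+m))))) with (S (S (S (x+m))) * fact (S (S (x+m))))%nat.
  change (fact (S m)) with (S m * fact m)%nat.
  rewrite !mult_INR. field. repeat split; apply INR_fact_neq_0.
Qed.

Lemma term_eq (x m r : nat) a : (r <= m)%nat ->
  Binomial.C (x+m+3) (m-r) * Binomial.C (x+r) r * (-1)^r * a^r * (2 * a^(x+2)) * a
  = K0 x m * (Binomial.C m r * (-1)^r * (2*a^(x+r+3)/(INR (x+r+1)*INR (x+r+2)*INR (x+r+3)))).
Proof.
  intros Hr. unfold K0, Binomial.C.
  replace (x+m+3-(m-r))%nat with (S (S (S (x+r))))%nat by lia.
  replace (x+r-r)%nat with x by lia.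
  change (fact (S (S (S (x+r))))) with (S (S (S (x+r))) * (S (S (x+r)) * (S (x+r) * fact (x+r))))%nat.
  replace (x+r+1)%nat with (S (x+r)) by lia.
  replace (x+r+2)%nat with (S (S (x+r))) by lia.
  replace (x+r+3)%nat with (S (S (S (x+r)))) by lia.
  change (a^(S (S (S (x+r))))) with (a * (a * (a * a^(x+r)))).
  rewrite !pow_add. cbn [pow].
  rewrite !mult_INR, !S_INR.
  pose proof (pos_INR (x+r)).
  field. repeat split; try apply INR_fact_neq_0; lra.
Qed.

Lemma J_eq (x m : nat) a : 0 < a < 1 -> J (x+m) x a = K0 x m * (1-a) * Kf x m a.
Proof.
  intros Ha. pose proof (rep1 x m a Ha) as H1.
  assert (Hs : a * (2 * a^(x+2) * sum_f_R0 (fun r => Binomial.C (x+m+3) (m-r) * Binomial.C (x+r) r * (-1)^r * a^r) m)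
     = K0 x m * sum_f_R0 (fun r => Binomial.C m r * (-1)^r * (2*a^(x+r+3)/(INR (x+r+1)*INR (x+r+2)*INR (x+r+3)))) m).
  { match goal with |- a * (?c * ?S) = _ => replace (a * (c * S)) with ((c*a)*S) by ring end.
    rewrite !scal_sum. apply sum_eq. intros i Hi. rewrite <- Rmult_assoc, term_eq by auto. ring. }
  apply (Rmult_eq_reg_l a); [|lra].
  replace (a * (K0 x m * (1-a) * Kf x m a)) with (K0 x m * (a * (1-a) * Kf x m a)) by ring.
  rewrite H1, L_val. unfold J.
  replace (x+m-x)%nat with m by lia.
  replace (x+m-x+1)%nat with (m+1)%nat by lia.
  rewrite Rmult_plus_distr_l, Rmult_plus_distr_l, <- Hs.
  replace (K0 x m * (a * (beta (x + 1) (m + 1) - a * beta x (m + 1))))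
    with (a * (K0 x m * beta (x+1) (m+1)) - a * a * (K0 x m * beta x (m+1))) by ring.
  rewrite K0_B1, K0_B2. ring.
Qed.

Lemma mvt_le (f df : R -> R) a b : a < b ->
  (forall t, a <= t <= b -> is_derive f t (df t)) ->
  (forall t, a <= t <= b -> df t <= 0) -> f b <= f a.
Proof.
  intros Hab Hd Hs.
  destruct (MVT_gen f a b df) as [z [Hz E]].
  - intros t Ht. rewrite Rmin_left, Rmax_right in Ht by lra. apply Hd; lra.
  - intros t Ht. rewrite Rmin_left, Rmax_right in Ht by lra.
    apply continuity_pt_filterlim. apply (ex_derive_continuous (K:=R_AbsRing) (V:=R_NormedModule)).
    exists (df t). apply Hd; lra.
  - rewrite Rmin_left, Rmax_right in Hz by lra.
    pose proof (Hs z Hz). nra.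
Qed.

Lemma mvt_lt (f df : R -> R) a b : a < b ->
  (forall t, a <= t <= b -> is_derive f t (df t)) ->
  (forall t, a <= t <= b -> df t < 0) -> f b < f a.
Proof.
  intros Hab Hd Hs.
  destruct (MVT_gen f a b df) as [z [Hz E]].
  - intros t Ht. rewrite Rmin_left, Rmax_right in Ht by lra. apply Hd; lra.
  - intros t Ht. rewrite Rmin_left, Rmax_right in Ht by lra.
    apply continuity_pt_filterlim. apply (ex_derive_continuous (K:=R_AbsRing) (V:=R_NormedModule)).
    exists (df t). apply Hd; lra.
  - rewrite Rmin_left, Rmax_right in Hz by lra.
    pose proof (Hs z Hz). nra.
Qed.

Definition sfun (X M t : R) : R :=
  let c := X / (X + M) in
  (M - X) * (X*ln(c*t) + M*ln(1-c*t) - X*ln(1-(1-c)*t) - M*ln((1-c)*t)).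

Lemma sfun_der (X M t : R) : 0 < X -> 0 < M -> 0 < t <= 1 ->
  is_derive (sfun X M) t (- (M-X)^2 * (X+M)^2 * (1-t) / (t * ((X+M) - M*t) * ((X+M) - X*t))).
Proof.
  intros HX HM Ht. unfold sfun.
  assert (HN : 0 < X + M) by lra.
  assert (Hc : 0 < X / (X+M) < 1).
  { split. apply Rdiv_lt_0_compat; lra. apply (Rmult_lt_reg_r (X+M)); auto. field_simplify; lra. }
  assert (H1 : 0 < (X+M) - M*t) by nra.
  assert (H2 : 0 < (X+M) - X*t) by nra.
  auto_derive.
  - assert (E1 : X / (X+M) * t = X*t/(X+M)) by (field; lra).
    assert (E2 : 1 + - (X / (X + M) * t) = (X+M - X*t)/(X+M)) by (field; lra).
    assert (E3 : 1 + - ((1 - X / (X + M)) * t) = (X+M - M*t)/(X+M)) by (field; lra).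
    assert (E4 : (1 - X / (X + M)) * t = M*t/(X+M)) by (field; lra).
    rewrite E2, E3, E1, E4. repeat split; try apply Rdiv_lt_0_compat; nra.
  - assert (E1 : X / (X+M) * t = X*t/(X+M)) by (field; lra).
    assert (E2 : 1 + - (X / (X + M) * t) = (X+M - X*t)/(X+M)) by (field; lra).
    assert (E3 : 1 + - ((1 - X / (X + M)) * t) = (X+M - M*t)/(X+M)) by (field; lra).
    assert (E4 : (1 - X / (X + M)) * t = M*t/(X+M)) by (field; lra).
    rewrite E2, E3, E1, E4. field. repeat split; nra.
Qed.

Lemma sfun_pos (X M t : R) : 0 < X -> 0 < M -> X <> M -> 0 < t < 1 -> 0 < sfun X M t.
Proof.
  intros HX HM HXM Ht.
  assert (H1 : sfun X M 1 = 0).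
  { unfold sfun. rewrite !Rmult_1_r. replace (1 - (1 - X/(X+M))) with (X/(X+M)) by ring. ring. }
  set (y := (t+1)/2).
  set (df := fun s => - (M-X)^2 * (X+M)^2 * (1-s) / (s * ((X+M) - M*s) * ((X+M) - X*s))).
  assert (Hq : 0 < (M-X)^2) by (apply pow_lt_1_compat || (apply Rlt_0_sqr_like; lra) || nra).
  assert (A : sfun X M y < sfun X M t).
  { apply (mvt_lt _ df); unfold y; try lra.
    - intros s Hs. apply sfun_der; lra.
    - intros s Hs. unfold df. unfold Rdiv.
      assert (0 < s * (X + M - M * s) * (X + M - X * s)).
      { apply Rmult_lt_0_compat; [apply Rmult_lt_0_compat|]; nra. }
      assert (0 < (M-X)^2 * (X+M)^2 * (1-s)).
      { apply Rmult_lt_0_compat; [apply Rmult_lt_0_compat|]; nra. }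
      assert (0 < / (s * (X + M - M * s) * (X + M - X * s))) by (apply Rinv_0_lt_compat; auto).
      nra. }
  assert (B : sfun X M 1 <= sfun X M y).
  { apply (mvt_le _ df); unfold y; try lra.
    - intros s Hs. apply sfun_der; lra.
    - intros s Hs. unfold df. unfold Rdiv.
      assert (0 < s * (X + M - M * s) * (X + M - X * s)).
      { apply Rmult_lt_0_compat; [apply Rmult_lt_0_compat|]; nra. }
      assert (0 <= (M-X)^2 * (X+M)^2 * (1-s)).
      { apply Rmult_le_pos; [apply Rmult_le_pos|]; nra. }
      assert (0 < / (s * (X + M - M * s) * (X + M - X * s))) by (apply Rinv_0_lt_compat; auto).
      nra. }
  lra.
Qed.

Definition psi (x m : nat) (q : R) : R := q^(x+1)*(1-q)^(m+1).

Lemma ln_psi x m q : 0 < q < 1 -> ln (psi x m q) = INR (x+1) * ln q + INR (m+1) * ln (1-q).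
Proof.
  intros Hq. unfold psi. rewrite ln_mult by (apply pow_lt; lra).
  rewrite !ln_pow by lra. ring.
Qed.

Lemma psi_cmp (x m : nat) t : 0 < t < 1 ->
  let X := INR (x+1) in let M := INR (m+1) in let c := X / (X + M) in
  (X < M -> psi x m (1-(1-c)*t) < psi x m (c*t)) /\
  (M < X -> psi x m (c*t) < psi x m (1-(1-c)*t)).
Proof.
  intros Ht X M c.
  assert (HX : 0 < X) by (apply lt_0_INR; lia).
  assert (HM : 0 < M) by (apply lt_0_INR; lia).
  assert (Hc : 0 < c < 1).
  { unfold c. split. apply Rdiv_lt_0_compat; lra. apply (Rmult_lt_reg_r (X+M)); [lra|]. field_simplify; lra. }
  assert (Hq1 : 0 < c*t < 1) by (split; nra).
  assert (Hq2 : 0 < 1-(1-c)*t < 1) by (split; nra).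
  assert (Hp1 : 0 < psi x m (c*t)) by (unfold psi; apply Rmult_lt_0_compat; apply pow_lt; lra).
  assert (Hp2 : 0 < psi x m (1-(1-c)*t)) by (unfold psi; apply Rmult_lt_0_compat; apply pow_lt; lra).
  assert (E : ln (psi x m (c*t)) - ln (psi x m (1-(1-c)*t)) =
      X*ln(c*t) + M*ln(1-c*t) - X*ln(1-(1-c)*t) - M*ln((1-c)*t)).
  { rewrite !ln_psi by auto. replace (1 - (1 - (1-c)*t)) with ((1-c)*t) by ring. unfold X, M. ring. }
  split; intros Hlt.
  - pose proof (sfun_pos X M t HX HM ltac:(lra) Ht) as S. unfold sfun in S. fold c in S.
    rewrite <- E in S. apply ln_lt_inv; auto. nra.
  - pose proof (sfun_pos X M t HX HM ltac:(lra) Ht) as S. unfold sfun in S. fold c in S.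
    rewrite <- E in S. apply ln_lt_inv; auto. nra.
Qed.

Lemma IBP_gen (x m : nat) a b :
  let c := INR (x+1) / INR (x+m+2) in
  is_RInt (fun p => INR (x+m+2) * (p^x*(1-p)^m*(c-p)^2) + (-1) * psi x m p) a b
    ((c - b) * psi x m b - (c - a) * psi x m a).
Proof.
  intros c.
  assert (HN : INR (x+m+2) <> 0) by (apply not_0_INR; lia).
  apply (is_RInt_dv (fun p => (c - p) * psi x m p)); [| |reflexivity].
  - intros p. unfold psi, c. auto_derive; auto.
    rewrite !Nat.add_1_r in *. cbn [Init.Nat.pred pow].
    change (match x with 0%nat => 1 | S _ => INR x + 1 end) with (INR (S x)).
    change (match m with 0%nat => 1 | S _ => INR m + 1 end) with (INR (S m)).
    rewrite !S_INR in *. rewrite !plus_INR in *. rewrite !S_INR in *. simpl (INR 1) in *.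
    change (INR 0) with 0 in *. unfold Rminus. match goal with |- ?a = ?b => change (@eq R a b) end. field. lra.
  - intros p. unfold psi. cont.
Qed.

Lemma IBP_L (x m : nat) : let c := INR (x+1) / INR (x+m+2) in
  INR (x+m+2) * Lf x m c = RInt (psi x m) 0 c.
Proof.
  intros c. pose proof (IBP_gen x m 0 c) as H. fold c in H.
  apply RInt_uniqueR in H. rewrite RInt_lin in H by (unfold psi; exr).
  assert (V : (c - c) * psi x m c - (c - 0) * psi x m 0 = 0).
  { unfold psi. rewrite Nat.add_1_r. cbn [pow]. ring. }
  rewrite V in H. unfold Lf. lra.
Qed.

Lemma IBP_R (x m : nat) : let c := INR (x+1) / INR (x+m+2) in
  INR (x+m+2) * Rf x m c = RInt (psi x m) c 1.
Proof.
  intros c. pose proof (IBP_gen x m c 1) as H. fold c in H.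
  apply RInt_uniqueR in H. rewrite RInt_lin in H by (unfold psi; exr).
  assert (V : (c - 1) * psi x m 1 - (c - c) * psi x m c = 0).
  { unfold psi. rewrite (Nat.add_1_r m). cbn [pow]. ring. }
  rewrite V in H. unfold Rf.
  rewrite (RInt_extR (fun p => p^x*(1-p)^m*(p-c)^2) (fun p => p^x*(1-p)^m*(c-p)^2)) by (intros; ring).
  lra.
Qed.

Lemma subst_L (x m : nat) c : RInt (psi x m) 0 c = c * RInt (fun t => psi x m (c*t)) 0 1.
Proof.
  pose proof (RInt_comp_lin (V:=R_CompleteNormedModule) (psi x m) c 0 0 1) as H.
  replace (c*0+0) with 0 in H by ring. replace (c*1+0) with c in H by ring.
  rewrite <- H by (unfold psi; exr).
  rewrite <- RInt_scalR by (unfold psi; exr).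
  apply RInt_extR. intros p. unfold scal; simpl; unfold mult; simpl. rewrite Rplus_0_r. reflexivity.
Qed.

Lemma subst_R (x m : nat) c : RInt (psi x m) c 1 = (1-c) * RInt (fun t => psi x m (1-(1-c)*t)) 0 1.
Proof.
  pose proof (RInt_comp_lin (V:=R_CompleteNormedModule) (psi x m) (-(1-c)) 1 0 1) as H.
  replace (-(1-c)*0+1) with 1 in H by ring. replace (-(1-c)*1+1) with c in H by ring.
  rewrite <- (opp_RInt_swap (V:=R_CompleteNormedModule) (psi x m) c 1) in H by (unfold psi; exr).
  assert (E : RInt (fun y : R => scal (- (1 - c)) (psi x m (- (1 - c) * y + 1))) 0 1
     = (-(1-c)) * RInt (fun t => psi x m (1-(1-c)*t)) 0 1).
  { rewrite <- RInt_scalR by (unfold psi; exr).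
    apply RInt_extR. intros p. unfold scal; simpl; unfold mult; simpl. f_equal. f_equal. ring. }
  specialize (H ltac:(unfold psi; exr)).
  assert (H2 : opp (RInt (psi x m) c 1) = -(1-c) * RInt (fun t => psi x m (1-(1-c)*t)) 0 1) by (rewrite <- H; exact E).
  unfold opp in H2; simpl in H2. lra.
Qed.

Lemma INRpos n : 0 < INR (S n).
Proof. apply lt_0_INR; lia. Qed.

Lemma bracket1 x m : beta (x+1) (m+1) - INR (x+1) / INR (x+m+3) * beta x (m+1) = 0.
Proof.
  pose proof (K0_B1 x m). pose proof (K0_B2 x m). pose proof (K0_pos x m).
  assert (HN : INR (x+m+3) <> 0) by (apply not_0_INR; lia).
  apply (Rmult_eq_reg_l (K0 x m)); [|lra].
  replace (K0 x m * (beta (x + 1) (m + 1) - INR (x + 1) / INR (x + m + 3) * beta x (m + 1)))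
    with (K0 x m * beta (x + 1) (m + 1) - INR (x + 1) / INR (x + m + 3) * (K0 x m * beta x (m + 1))) by ring.
  rewrite H, H0. field. auto.
Qed.

Lemma bracket2 x m : beta (x+2) m - INR (x+2) / INR (x+m+3) * beta (x+1) m = 0.
Proof.
  rewrite !beta_val.
  replace (x+2+m+1)%nat with (S (x+m+2)) by lia.
  replace (x+1+m+1)%nat with (x+m+2)%nat by lia.
  replace (x+m+3)%nat with (S (x+m+2)) by lia.
  replace (x+2)%nat with (S (x+1)) by lia.
  change (fact (S (x+1))) with (S (x+1) * fact (x+1))%nat.
  change (fact (S (x+m+2))) with (S (x+m+2) * fact (x+m+2))%nat.
  rewrite !mult_INR. field. split; [apply INR_fact_neq_0|]. pose proof (INRpos (x+m+2)). lra.
Qed.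

Lemma bracket3 x m :
  (beta (x+1) (m+1) - INR (x+1) / INR (x+m+2) * beta x (m+1))
  + (beta (x+2) m - INR (x+1) / INR (x+m+2) * beta (x+1) m) = 0.
Proof.
  rewrite !beta_val.
  replace (x+1+(m+1)+1)%nat with (S (S (S (x+m)))) by lia.
  replace (x+(m+1)+1)%nat with (S (S (x+m))) by lia.
  replace (x+2+m+1)%nat with (S (S (S (x+m)))) by lia.
  replace (x+1+m+1)%nat with (S (S (x+m))) by lia.
  replace (x+m+2)%nat with (S (S (x+m))) by lia.
  replace (x+2)%nat with (S (S x)) by lia.
  replace (x+1)%nat with (S x) by lia.
  replace (m+1)%nat with (S m) by lia.
  change (fact (S (S (S (x+m))))) with (S (S (S (x+m))) * (S (S (x+m)) * fact (S (x+m))))%nat.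
  change (fact (S (S (x+m)))) with (S (S (x+m)) * fact (S (x+m)))%nat.
  change (fact (S (S x))) with (S (S x) * (S x * fact x))%nat.
  change (fact (S x)) with (S x * fact x)%nat.
  change (fact (S m)) with (S m * fact m)%nat.
  rewrite !mult_INR. rewrite !S_INR, !plus_INR.
  pose proof (pos_INR x). pose proof (pos_INR m).
  field. repeat split; try apply INR_fact_neq_0; lra.
Qed.

Lemma in01_c1 x m : 0 < INR (x+1) / INR (x+m+3) < 1.
Proof.
  assert (0 < INR (x+1)) by (apply lt_0_INR; lia).
  assert (INR (x+1) < INR (x+m+3)) by (apply lt_INR; lia).
  split. apply Rdiv_lt_0_compat; lra. apply (Rmult_lt_reg_r (INR (x+m+3))); [lra|]. field_simplify; lra.
Qed.

Lemma in01_c2 x m : 0 < INR (x+2) / INR (x+m+3) < 1.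
Proof.
  assert (0 < INR (x+2)) by (apply lt_0_INR; lia).
  assert (INR (x+2) < INR (x+m+3)) by (apply lt_INR; lia).
  split. apply Rdiv_lt_0_compat; lra. apply (Rmult_lt_reg_r (INR (x+m+3))); [lra|]. field_simplify; lra.
Qed.

Lemma in01_c3 x m : 0 < INR (x+1) / INR (x+m+2) < 1.
Proof.
  assert (0 < INR (x+1)) by (apply lt_0_INR; lia).
  assert (INR (x+1) < INR (x+m+2)) by (apply lt_INR; lia).
  split. apply Rdiv_lt_0_compat; lra. apply (Rmult_lt_reg_r (INR (x+m+2))); [lra|]. field_simplify; lra.
Qed.

Lemma K_c1 x m : 0 < Kf x m (INR (x+1) / INR (x+m+3)).
Proof.
  set (c := INR (x+1) / INR (x+m+3)). pose proof (in01_c1 x m) as Hc. fold c in Hc.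
  pose proof (rep1 x m c Hc) as H. unfold c in H at 3. rewrite bracket1 in H. fold c in H.
  assert (HL : 0 < Lf x m c).
  { unfold Lf. apply RInt_gt_0; [lra| |cont]. intros p Hp.
    apply Rmult_lt_0_compat. apply pos_w; lra. apply pow_lt; lra. }
  assert (0 < c * (1-c)) by (apply Rmult_lt_0_compat; lra).
  assert (0 < c * (1-c) * Kf x m c) by lra.
  apply (Rmult_lt_reg_l (c*(1-c))); lra.
Qed.

Lemma K_c2 x m : Kf x m (INR (x+2) / INR (x+m+3)) < 0.
Proof.
  set (c := INR (x+2) / INR (x+m+3)). pose proof (in01_c2 x m) as Hc. fold c in Hc.
  pose proof (rep2 x m c Hc) as H. unfold c in H at 3. rewrite bracket2 in H. fold c in H.
  assert (HR : 0 < Rf x m c).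
  { unfold Rf. apply RInt_gt_0; [lra| |cont]. intros p Hp.
    apply Rmult_lt_0_compat. apply pos_w; lra. apply pow_lt; lra. }
  assert (0 < c * (1-c)) by (apply Rmult_lt_0_compat; lra).
  assert (c * (1-c) * Kf x m c < 0) by nra.
  apply (Rmult_lt_reg_l (c*(1-c))); lra.
Qed.

Lemma K_c3 x m : let c := INR (x+1) / INR (x+m+2) in
  INR (x+m+2) * Kf x m c = RInt (fun t => psi x m (c*t)) 0 1 - RInt (fun t => psi x m (1-(1-c)*t)) 0 1.
Proof.
  intros c. pose proof (in01_c3 x m) as Hc. fold c in Hc.
  pose proof (rep1 x m c Hc) as H1. pose proof (rep2 x m c Hc) as H2.
  pose proof (bracket3 x m) as B. fold c in B.
  pose proof (IBP_L x m) as L. pose proof (IBP_R x m) as R. cbv zeta in L, R. fold c in L, R.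
  rewrite subst_L in L. rewrite subst_R in R.
  assert (E : c * (1-c) * Kf x m c = (1-c) * (c * (1-c) * Kf x m c) + c * (c * (1-c) * Kf x m c)) by ring.
  assert (E2 : INR (x+m+2) * (c*(1-c)*Kf x m c) = c*(1-c)*(RInt (fun t => psi x m (c*t)) 0 1 - RInt (fun t => psi x m (1-(1-c)*t)) 0 1)).
  { rewrite E at 1. rewrite H1 at 1. rewrite H2.
    replace (INR (x + m + 2) *
      ((1 - c) * (c * (beta (x + 1) (m + 1) - c * beta x (m + 1)) + Lf x m c) +
       c * ((1 - c) * (beta (x + 2) m - c * beta (x + 1) m) - Rf x m c)))
     with (INR (x+m+2) * c * (1-c) * ((beta (x + 1) (m + 1) - c * beta x (m + 1)) + (beta (x + 2) m - c * beta (x + 1) m))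
           + (1-c) * (INR (x+m+2) * Lf x m c) - c * (INR (x+m+2) * Rf x m c)) by ring.
    rewrite B, L, R. ring. }
  assert (0 < c * (1-c)) by (apply Rmult_lt_0_compat; lra).
  apply (Rmult_eq_reg_l (c*(1-c))); [|lra].
  rewrite <- E2. ring.
Qed.

Lemma c3_eq x m : INR (x+1) / INR (x+m+2) = INR (x+1) / (INR (x+1) + INR (m+1)).
Proof. replace (x+m+2)%nat with ((x+1)+(m+1))%nat by lia. rewrite (plus_INR (x+1) (m+1)). reflexivity. Qed.

Lemma K_c3_sign x m :
  ((x < m)%nat -> 0 < Kf x m (INR (x+1) / INR (x+m+2))) /\
  ((m < x)%nat -> Kf x m (INR (x+1) / INR (x+m+2)) < 0).
Proof.
  pose proof (K_c3 x m) as H. cbv zeta in H.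
  set (c := INR (x+1) / INR (x+m+2)) in *.
  assert (HN : 0 < INR (x+m+2)) by (apply lt_0_INR; lia).
  pose proof (in01_c3 x m) as Hc. fold c in Hc.
  assert (Ec : c = INR (x+1) / (INR (x+1) + INR (m+1))) by (unfold c; apply c3_eq).
  split; intros Hxm.
  - assert (RInt (fun t => psi x m (1-(1-c)*t)) 0 1 < RInt (fun t => psi x m (c*t)) 0 1).
    { apply RInt_lt; [lra|unfold psi; cont|unfold psi; cont|].
      intros t Ht. rewrite Ec. apply (psi_cmp x m t Ht). apply lt_INR; lia. }
    apply (Rmult_lt_reg_l (INR (x+m+2))); lra.
  - assert (RInt (fun t => psi x m (c*t)) 0 1 < RInt (fun t => psi x m (1-(1-c)*t)) 0 1).
    { apply RInt_lt; [lra|unfold psi; cont|unfold psi; cont|].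
      intros t Ht. rewrite Ec. apply (psi_cmp x m t Ht). apply lt_INR; lia. }
    apply (Rmult_lt_reg_l (INR (x+m+2))); lra.
Qed.

Lemma tau_gt x m tau c : 0 < tau < 1 -> 0 < c < 1 -> Kf x m tau = 0 -> 0 < Kf x m c -> c < tau.
Proof.
  intros Ht Hc HK Hp. destruct (Rtotal_order c tau) as [H|[H|H]]; auto.
  - subst. lra.
  - pose proof (Kf_decr x m tau c ltac:(lra) H ltac:(lra)). lra.
Qed.

Lemma tau_lt x m tau c : 0 < tau < 1 -> 0 < c < 1 -> Kf x m tau = 0 -> Kf x m c < 0 -> tau < c.
Proof.
  intros Ht Hc HK Hp. destruct (Rtotal_order tau c) as [H|[H|H]]; auto.
  - subst. lra.
  - pose proof (Kf_decr x m c tau ltac:(lra) H ltac:(lra)). lra.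
Qed.

Theorem theorem3 (n x : nat) (tau : R) :
  (1 <= n)%nat -> (x <= n)%nat ->
  0 < tau < 1 -> g n x tau = tau ->
  (* (1) tau is the unique zero of J_n(., x) in (0,1) *)
  (J n x tau = 0 /\ (forall a, 0 < a < 1 -> J n x a = 0 -> a = tau)) /\
  (* (2) bounds *)
  (INR (x + 1) / INR (n + 3) < tau < INR (x + 2) / INR (n + 3)) /\
  (INR x < INR n / 2 -> INR (x + 1) / INR (n + 2) < tau < INR (x + 2) / INR (n + 3)) /\
  (INR x > INR n / 2 -> INR (x + 1) / INR (n + 3) < tau < INR (x + 1) / INR (n + 2)).
Proof.
  intros Hn Hx Ht Hg.
  destruct (Nat.le_exists_sub x n Hx) as [m [Em _]].
  rewrite Nat.add_comm in Em. subst n.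
  apply (g_iff x m tau Ht) in Hg.
  pose proof (K0_pos x m) as HK0.
  assert (B1 : INR (x+1) / INR (x+m+3) < tau).
  { apply (tau_gt x m); auto. apply in01_c1. apply K_c1. }
  assert (B2 : tau < INR (x+2) / INR (x+m+3)).
  { apply (tau_lt x m); auto. apply in01_c2. apply K_c2. }
  destruct (K_c3_sign x m) as [S1 S2].
  split; [split|split; [split; auto|split]].
  - rewrite (J_eq x m tau Ht), Hg. ring.
  - intros a Ha HJ. rewrite (J_eq x m a Ha) in HJ.
    assert (HKa : Kf x m a = 0).
    { assert (K0 x m * (1-a) <> 0) by (apply Rmult_integral_contrapositive; split; lra).
      apply (Rmult_eq_reg_l (K0 x m * (1-a))); auto. lra. }
    destruct (Rtotal_order a tau) as [H|[H|H]]; auto.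
    + pose proof (Kf_decr x m a tau ltac:(lra) H ltac:(lra)). lra.
    + pose proof (Kf_decr x m tau a ltac:(lra) H ltac:(lra)). lra.
  - intros Hlt. split; auto.
    apply (tau_gt x m); auto. apply in01_c3. apply S1.
    rewrite plus_INR in Hlt. apply INR_lt. lra.
  - intros Hgt. split; auto.
    apply (tau_lt x m); auto. apply in01_c3. apply S2.
    rewrite plus_INR in Hgt. apply INR_lt. lra.
Qed.
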